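(* Let $H$ be an ideal geometric-value hash function with parameter $\frac{\gamma}{1+\gamma}$, and let the hash key $\zeta_i$ be drawn uniformly and be unknown to the adversary. In the procedure $\textsf{DPFMPS-Gen}$ (described in the context), for each fixed $i\in[M]$, the output row $\boldsymbol{A}_i=(\boldsymbol{A}_{i,1},\ldots,\boldsymbol{A}_{i,k'})$ (one set of partition sketches), viewed as a randomized function of the local dataset, is $\epsilon'$-differentially private, where $\epsilon'=\frac{\epsilon_2}{4\sqrt{M\log(1/\delta_2)}}$.
   Context: Differential privacy: a randomized algorithm $\mathcal{A}$ is $\epsilon$-DP if for all pairs of datasets $\mathbf{X},\mathbf{X}'$ differing in one user record (one user added or removed) and all sets $O$ of outputs, $\Pr[\mathcal{A}(\mathbf{X})\in O]\le e^{\epsilon}\Pr[\mathcal{A}(\mathbf{X}')\in O]$. A random variable $Y\sim\mathrm{Geometric}(p)$ takes values in $\{1,2,\ldots\}$ with $\Pr[Y\le z]=1-(1-p)^z$. An ideal geometric-value hash function $H:\mathcal{X}\times\mathbb{Z}\to\mathbb{N}_+$ with parameter $\frac{\gamma}{1+\gamma}$ ($\gamma>0$) is one such that, for a uniformly drawn key $\zeta$, for any finite set of distinct inputs $x_1,\ldots,x_t$ the values $H_\zeta(x_1),\ldots,H_\zeta(x_t)$ are i.i.d. $\mathrm{Geometric}(\frac{\gamma}{1+\gamma})$. Procedure $\mathtt{DPFM}(\mathcal{M},\epsilon',\gamma,\zeta)$ on a set $\mathcal{M}$ of user ids: set $n_p=\lceil 1/(e^{\epsilon'}-1)\rceil$ and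 $\alpha_{\min}=\lceil\log_{1+\gamma}\frac{1}{1-e^{-\epsilon'}}\rceil$; let $\alpha_p=\max\{Y_1,\ldots,Y_{n_p}\}$ with $Y_j$ fresh i.i.d. $\mathrm{Geometric}(\frac{\gamma}{1+\gamma})$; let $\alpha_{real}=\max\{H_\zeta(\mathtt{id}):\mathtt{id}\in\mathcal{M}\}$; return $\max\{\alpha_p,\alpha_{real},\alpha_{\min}\}$. Procedure $\textsf{DPFMPS-Gen}$ with inputs: local dataset $\mathbf{X}^{(\ell)}$ of records $x^{(\ell)}_{\mathtt{id}}$ indexed by user ids, a given set of centers $\{c^{(\ell)}_1,\ldots,c^{(\ell)}_{k'}\}$ (not depending on the protected data), parameters $\epsilon_2,\delta_2,\gamma,M$ and keys $\zeta_1,\ldots,\zeta_M$. It sets $\epsilon'=\frac{\epsilon_2}{4\sqrt{M\log(1/\delta_2)}}$, partitions user ids into $\mathcal{M}^{(\ell)}_1,\ldots,\mathcal{M}^{(\ell)}_{k'}$ with $\mathtt{id}\in\mathcal{M}^{(\ell)}_a$ iff $a=\arg\min_j\|x^{(\ell)}_{\mathtt{id}}-c^{(\ell)}_j\|_2^2$, and sets $\boldsymbol{A}_{i,a}=\mathtt{DPFM}(\mathcal{M}^{(\ell)}_a,\epsilon',\gamma,\zeta_i)$ for $i\in[M]$, $a\in[k']$. *)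

(* Defs.v *)
From HB Require Import structures.
From mathcomp Require Import all_boot all_order all_algebra.
From mathcomp Require Import finmap.
From mathcomp Require Import all_classical all_reals all_analysis.
Set Implicit Arguments. Unset Strict Implicit. Unset Printing Implicit Defensive.
Import Order.TTheory GRing.Theory Num.Theory.
Local Open Scope ring_scope.
Local Open Scope classical_set_scope.
Local Open Scope fset_scope.

(* CDF of Geometric(p) on {1,2,...}: Pr[Y <= z] = 1 - (1-p)^z. *)
Definition geomCDF (R : realType) (p : R) (z : nat) : R := 1 - (1 - p) ^+ z.

Definition iid_geometric (R : realType) (d : measure_display)
  (Omega : measurableType d) (P : probability Omega R)
  (I : eqType) (G : I -> Omega -> nat) (p : R) : Prop :=
  (forall j z, measurable [set w | G j w = z]) /\
  (forall (s : seq I) (z : I -> nat), uniq s ->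
     P [set w | forall j, j \in s -> (G j w <= z j)%N]
     = (\prod_(j <- s) geomCDF p (z j))%:E).

(* The randomness used by one row of DPFMPS-Gen: the hash values
   H_zeta(id) of all user ids, and the fresh geometric samples Y_{a,j}
   used by the call DPFM(M_a, ...) for partition a. *)
Definition hash_source (d : measure_display) (Omega : measurableType d)
  (idT : choiceType) (K : Type) (k : nat)
  (H : K -> idT -> nat) (zeta : Omega -> K) (Y : 'I_k -> nat -> Omega -> nat)
  : idT + ('I_k * nat) -> Omega -> nat :=
  fun j w => match j with
             | inl u => H (zeta w) u
             | inr aj => Y aj.1 aj.2 w
             end.

Definition sqdist (R : realType) (n : nat) (x y : 'rV[R]_n) : R :=
  \sum_(i < n) (x 0 i - y 0 i) ^+ 2.

Definition assign (R : realType) (n k : nat) (c : 'I_k.+1 -> 'rV[R]_n)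
  (x : 'rV[R]_n) : 'I_k.+1 :=
  Order.arg_min (ord0 : 'I_k.+1) xpredT (fun j => sqdist x (c j)).

Definition dataset (R : realType) (idT : choiceType) (n : nat) :=
  {fmap idT -> 'rV[R]_n}.

Definition add_one (R : realType) (idT : choiceType) (n : nat)
  (X X' : dataset R idT n) : Prop :=
  exists (u : idT) (x : 'rV[R]_n), u \notin domf X /\ X' = X.[u <- x]%fmap.

Definition neighbors (R : realType) (idT : choiceType) (n : nat)
  (X X' : dataset R idT n) : Prop := add_one X X' \/ add_one X' X.

Definition eps_DP (R : realType) (d : measure_display)
  (Omega : measurableType d) (P : probability Omega R)
  (idT : choiceType) (n : nat) (Out : Type)
  (eps : R) (A : dataset R idT n -> Omega -> Out) : Prop :=
  forall X X' : dataset R idT n, neighbors X X' ->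
  forall O : set Out,
    (P (A X @^-1` O) <= (expR eps)%:E * P (A X' @^-1` O))%E.

Definition eps_prime (R : realType) (eps2 delta2 : R) (M : nat) : R :=
  eps2 / (4 * Num.sqrt (M%:R * ln (delta2^-1))).

Definition n_p (R : realType) (eps' : R) : nat :=
  `|Num.ceil ((expR eps' - 1)^-1)|%N.

Definition alpha_min (R : realType) (eps' gamma : R) : nat :=
  `|Num.ceil (ln ((1 - expR (- eps'))^-1) / ln (1 + gamma))|%N.

(* DPFM(M_a, eps', gamma, zeta) with M_a the ids of X assigned to center a:
   max{alpha_p, alpha_real, alpha_min}. *)
Definition DPFM (R : realType) (d : measure_display) (Omega : measurableType d)
  (idT : choiceType) (K : Type) (n k : nat)
  (H : K -> idT -> nat) (zeta : Omega -> K) (Y : 'I_k.+1 -> nat -> Omega -> nat)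
  (eps' gamma : R) (c : 'I_k.+1 -> 'rV[R]_n) (X : dataset R idT n)
  (a : 'I_k.+1) (w : Omega) : nat :=
  let alpha_p := (\max_(j < n_p eps') Y a j w)%N in
  let alpha_real := (\max_(u : domf X | assign c (X u) == a) H (zeta w) (val u))%N in
  maxn (maxn alpha_p alpha_real) (alpha_min eps' gamma).

Definition DPFMPS_row (R : realType) (d : measure_display) (Omega : measurableType d)
  (idT : choiceType) (K : Type) (n k : nat)
  (H : K -> idT -> nat) (zeta : Omega -> K) (Y : 'I_k.+1 -> nat -> Omega -> nat)
  (eps' gamma : R) (c : 'I_k.+1 -> 'rV[R]_n)
  (X : dataset R idT n) (w : Omega) : {ffun 'I_k.+1 -> nat} :=
  [ffun a => DPFM H zeta Y eps' gamma c X a w].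

(* Main.v *)
Require Import Defs.
From HB Require Import structures.
From mathcomp Require Import all_boot all_order all_algebra.
From mathcomp Require Import finmap.
From mathcomp Require Import all_classical all_reals all_analysis.
From mathcomp Require Import ring lra.
Import Order.TTheory GRing.Theory Num.Theory.
Local Open Scope ring_scope.

Section Helpers.
Set Implicit Arguments. Unset Strict Implicit. Unset Printing Implicit Defensive.

Lemma geo_diff_lb (R : realFieldType) (a b : R) (N : nat) :
  0 <= b -> b <= a -> b <= 1 ->
  N%:R * b ^+ N * (a - b) <= a ^+ N - b ^+ N.
Proof.
move=> b0 ba b1; elim: N => [|N IH]; first by rewrite !expr0 mul0r mul0r subrr.
have bN0 : 0 <= b ^+ N by rewrite exprn_ge0.
have h1 : a ^+ N.+1 - b ^+ N.+1 = a * (a ^+ N - b ^+ N) + b ^+ N * (a - b).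
  by rewrite !exprS; ring.
rewrite h1 exprS -natr1.
have ab0 : 0 <= a - b by rewrite subr_ge0.
have N0 : 0 <= N%:R :> R by rewrite ler0n.
set t := N%:R * b ^+ N * (a - b) in IH *.
have t0 : 0 <= t by rewrite /t !mulr_ge0.
have e1 : t * b <= t * a by apply: ler_wpM2l.
have e2 : t * a <= (a ^+ N - b ^+ N) * a by apply: ler_wpM2r => //; apply: le_trans ba.
have e3 : b ^+ N * (a - b) * b <= b ^+ N * (a - b).
  by rewrite -[X in _ <= X]mulr1; apply: ler_wpM2l => //; rewrite mulr_ge0.
have -> : (N%:R + 1) * (b * b ^+ N) * (a - b) = t * b + b ^+ N * (a - b) * b by rewrite /t; ring.
nra.
Qed.

Lemma ratio_diff (R : realFieldType) (a b e : R) (N : nat) :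
  0 <= b -> b <= a -> a <= 1 -> 1 <= e * a -> (0 < N)%N -> 1 + N%:R^-1 <= e ->
  a ^+ N - b ^+ N <= e * (a ^+ N.+1 - b ^+ N.+1) /\
  a ^+ N.+1 - b ^+ N.+1 <= e * (a ^+ N - b ^+ N).
Proof.
move=> b0 ba a1 ea N0 eN.
have b1 : b <= 1 by apply: le_trans a1.
have bN0 : 0 <= b ^+ N by rewrite exprn_ge0.
have ab0 : 0 <= a - b by rewrite subr_ge0.
have h1 : a ^+ N.+1 - b ^+ N.+1 = a * (a ^+ N - b ^+ N) + b ^+ N * (a - b).
  by rewrite !exprS; ring.
have d0 : 0 <= a ^+ N - b ^+ N by rewrite subr_ge0 lerXn2r // ?nnegrE; apply: le_trans ba.
have x0 : 0 <= b ^+ N * (a - b) by rewrite mulr_ge0.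
have e0 : 0 <= e by apply: le_trans eN; rewrite addr_ge0 ?invr_ge0 ?ler0n.
rewrite h1; split.
  have : a ^+ N - b ^+ N <= e * (a * (a ^+ N - b ^+ N)).
    rewrite mulrA -[X in X <= _]mul1r; exact: ler_wpM2r.
  move=> h; apply: le_trans h _; apply: ler_wpM2l => //; rewrite lerDl //.
have lb := @geo_diff_lb R a b N b0 ba b1.
have Npos : 0 < N%:R :> R by rewrite ltr0n.
have : b ^+ N * (a - b) <= N%:R^-1 * (a ^+ N - b ^+ N).
  rewrite -(ler_pM2l Npos) [X in _ <= X]mulrA mulfV ?mul1r; [by rewrite mulrA | by rewrite gt_eqF].
move=> h2.
have : a * (a ^+ N - b ^+ N) + b ^+ N * (a - b) <= (1 + N%:R^-1) * (a ^+ N - b ^+ N).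
  rewrite mulrDl mul1r; apply: lerD => //; rewrite -[X in _ <= X]mul1r; exact: ler_wpM2r.
move=> h3; apply: le_trans h3 _; exact: ler_wpM2r.
Qed.

Lemma ratio_eq (R : realFieldType) (a e : R) (N : nat) :
  0 <= a -> a <= 1 -> 1 <= e * a ->
  a ^+ N <= e * a ^+ N.+1 /\ a ^+ N.+1 <= e * a ^+ N.
Proof.
move=> a0 a1 ea.
have aN : 0 <= a ^+ N by rewrite exprn_ge0.
have e1 : 1 <= e.
  case: (lerP 0 e) => e0.
    have : e * a <= e * 1 by apply: ler_wpM2l.
    rewrite mulr1; lra.
  have : e * a <= 0 by rewrite mulr_le0_ge0 // ltW.
  lra.
split; first by rewrite exprS mulrA -[X in X <= _]mul1r; apply: ler_wpM2r.
rewrite exprS; apply: le_trans (_ : 1 * a ^+ N <= _); first by apply: ler_wpM2r.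
by apply: ler_wpM2r.
Qed.

Definition Dn (R : realType) (m N : nat) (F : nat -> R) (z : nat) : R :=
  (m <= z)%N%:R * F z ^+ N.
Definition pmC (R : realType) (C : nat -> R) (z : nat) : R :=
  match z with 0 => C 0%N | z'.+1 => C z'.+1 - C z' end.
Notation pmN m N F := (pmC (Dn m N F)).

Lemma pm_ge0 (R : realType) m N (F : nat -> R) z :
  (forall z, 0 <= F z) -> {homo F : x y / (x <= y)%N >-> x <= y} ->
  0 <= pmN m N F z.
Proof.
move=> F0 Fh; case: z => [|z] /=; first by rewrite /Dn mulr_ge0 ?ler0n ?exprn_ge0.
rewrite subr_ge0 /Dn.
case: (leqP m z) => mz.
  rewrite (leq_trans mz (leqnSn z)) !mul1r lerXn2r ?nnegrE //; exact: Fh.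
by rewrite mul0r mulr_ge0 ?ler0n ?exprn_ge0.
Qed.

Lemma pm_ratio (R : realType) m N (F : nat -> R) (e : R) z :
  (forall z, 0 <= F z <= 1) -> {homo F : x y / (x <= y)%N >-> x <= y} ->
  1 <= e * F m -> (0 < N)%N -> 1 + N%:R^-1 <= e ->
  pmN m N F z <= e * pmN m N.+1 F z /\ pmN m N.+1 F z <= e * pmN m N F z.
Proof.
move=> F01 Fh eF N0 eN.
have e0 : 0 <= e by apply: le_trans eN; rewrite addr_ge0 ?invr_ge0 ?ler0n.
have z0 : forall x : R, x = 0 -> x <= e * x /\ x <= e * x.
  by move=> x ->; rewrite mulr0.
case: z => [|z] /=.
  rewrite /Dn; case: (leqP m 0) => m0; last by rewrite !mul0r; apply: z0.
  have m0' : m = 0%N by apply/eqP; rewrite -leqn0.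
  rewrite !mul1r; move: (F01 0%N) => /andP[a0 a1].
  by apply: ratio_eq => //; move: eF; rewrite m0'.
rewrite /Dn.
case: (ltngtP m z.+1) => mz.
- have mz' : (m <= z)%N by [].
  rewrite ?(ltnW mz) ?mz' !mul1r.
  move: (F01 z) (F01 z.+1) => /andP[b0 b1] /andP[a0 a1].
  have Fba : F z <= F z.+1 by apply: Fh.
  apply: ratio_diff => //.
  by apply: le_trans eF _; apply: ler_wpM2l => //; apply: Fh; apply: ltnW.
- have -> : (m <= z)%N = false by apply/negbTE; rewrite -ltnNge ltnW.
  by rewrite !mul0r subrr; apply: z0.
  rewrite mz ltnn !mul1r !mul0r !subr0 -mz.
  move: (F01 m) => /andP[a0 a1].
  by apply: ratio_eq.
Qed.

Lemma ceil_nat (R : realType) (t : R) : 0 < t -> t <= (`|Num.ceil t|%N)%:R.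
Proof.
move=> t0; have h := Num.Theory.ceil_ge t.
have c0 : 0 <= Num.ceil t by rewrite -(ler0z R); apply: le_trans h; exact: ltW.
by rewrite natr_absz ger0_norm.
Qed.

Lemma np_facts (R : realType) (eps : R) :
  0 < eps -> (0 < n_p eps)%N /\ 1 + (n_p eps)%:R^-1 <= expR eps.
Proof.
move=> e0; have e1 : 1 < expR eps by rewrite expR_gt1.
have t0 : 0 < (expR eps - 1)^-1 by rewrite invr_gt0 subr_gt0.
have h := ceil_nat t0.
have np0 : 0 < (n_p eps)%:R :> R by apply: lt_le_trans h.
split; first by rewrite -(ltr0n R).
rewrite -lerBrDl -[X in _ <= X](invrK (expR eps - 1)) lef_pV2 //.
Qed.

Lemma eps_pos (R : realType) (eps2 delta2 : R) (M : nat) :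
  0 < eps2 -> 0 < delta2 -> delta2 < 1 -> (0 < M)%N -> 0 < eps_prime eps2 delta2 M.
Proof.
move=> e2 d0 d1 M0; rewrite /eps_prime divr_gt0 // mulr_gt0 // sqrtr_gt0.
by rewrite mulr_gt0 ?ltr0n // ln_gt0 // invf_gt1.
Qed.

Lemma F_facts (R : realType) (gamma : R) : 0 < gamma ->
  (forall z, 0 <= geomCDF (gamma / (1 + gamma)) z <= 1) /\
  {homo geomCDF (gamma / (1 + gamma)) : x y / (x <= y)%N >-> x <= y}.
Proof.
move=> g0.
have q : 1 - gamma / (1 + gamma) = (1 + gamma)^-1.
  by field; rewrite gt_eqF // ltr_pwDr.
have q0 : 0 <= (1 + gamma)^-1 by rewrite invr_ge0 addr_ge0 // ltW.
have q1 : (1 + gamma)^-1 <= 1 by rewrite invf_le1 ?ler_addl ?ltW // ltr_pwDr.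
rewrite /geomCDF q; split.
  move=> z; rewrite subr_ge0 exprn_ile1 //= lerBlDr lerDl exprn_ge0 //.
by move=> x y xy; rewrite lerB // ler_wiXn2l.
Qed.

Lemma alpha_facts (R : realType) (eps gamma : R) : 0 < eps -> 0 < gamma ->
  1 <= expR eps * geomCDF (gamma / (1 + gamma)) (alpha_min eps gamma).
Proof.
move=> e0 g0.
set m := alpha_min eps gamma.
have q : 1 - gamma / (1 + gamma) = (1 + gamma)^-1.
  by field; rewrite gt_eqF // ltr_pwDr.
have g1 : 1 < 1 + gamma by rewrite ltr_pwDr.
have lg : 0 < ln (1 + gamma) by rewrite ln_gt0.
set y := 1 - expR (- eps).
have y0 : 0 < y by rewrite subr_gt0 expR_lt1 oppr_lt0.
have y1 : y < 1 by rewrite /y ltrBlDr ltrDl expR_gt0.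
have L0 : 0 < ln y^-1 by rewrite ln_gt0 // invf_gt1.
have hm : ln y^-1 / ln (1 + gamma) <= m%:R by apply: ceil_nat; rewrite divr_gt0.
have hm' : ln y^-1 <= m%:R * ln (1 + gamma).
  by rewrite -ler_pdivrMr.
have qm : (1 + gamma)^-1 ^+ m <= y.
  have qpos : 0 < (1 + gamma)^-1 ^+ m by rewrite exprn_gt0 // invr_gt0 (lt_trans _ g1).
  rewrite -(lnK qpos) lnXn ?invr_gt0 ?(lt_trans _ g1) //.
  rewrite lnV ?posrE ?(lt_trans _ g1) // -mulr_natl mulrN.
  have -> : y = expR (- ln y^-1).
    by rewrite expRN lnK ?invrK // posrE invr_gt0.
  by rewrite ler_expR lerN2.
rewrite /geomCDF q.
have h : expR (- eps) <= 1 - (1 + gamma)^-1 ^+ m.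
  by rewrite lerBrDr -lerBrDl.
have : expR eps * expR (- eps) <= expR eps * (1 - (1 + gamma)^-1 ^+ m).
  by apply: ler_wpM2l => //; exact: ltW (expR_gt0 _).
by rewrite -expRD subrr expR0.
Qed.

Section AuxMeas.
Local Open Scope classical_set_scope.


Section Meas.
Context (R : realType) (d : measure_display) (Omega : measurableType d)
  (P : probability Omega R).

Lemma meas_forall_seq (T : eqType) (s : seq T) (E : T -> set Omega) :
  (forall x, measurable (E x)) ->
  measurable [set w | forall x, x \in s -> E x w].
Proof.
move=> hE; elim: s => [|x s IH].
  by rewrite (_ : [set w | _] = setT); [exact: measurableT | apply/seteqP; split].
rewrite (_ : [set w | _] = E x `&` [set w | forall y, y \in s -> E y w]).
  exact: measurableI.
apply/seteqP; split => w /=.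
  by move=> h; split; [apply: h; rewrite mem_head | move=> y ys; apply: h; rewrite in_cons ys orbT].
by move=> [h1 h2] y; rewrite in_cons => /orP[/eqP -> //|]; apply: h2.
Qed.

Lemma meas_forall_fin (T : finType) (E : T -> set Omega) :
  (forall x, measurable (E x)) -> measurable [set w | forall x, E x w].
Proof.
move=> hE; rewrite (_ : [set w | _] = [set w | forall x, x \in enum T -> E x w]).
  exact: meas_forall_seq.
apply/seteqP; split => w /=; first by move=> h x _; apply: h.
by move=> h x; apply: h; rewrite mem_enum.
Qed.

Lemma meas_le (g : Omega -> nat) :
  (forall z, measurable [set w | g w = z]) ->
  forall z, measurable [set w | (g w <= z)%N].
Proof.
move=> hg; elim => [|z IH].
  by rewrite (_ : [set w | _] = [set w | g w = 0%N]) //; apply/seteqP; split => w /=; rewrite leqn0 => /eqP.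
rewrite (_ : [set w | _] = [set w | (g w <= z)%N] `|` [set w | g w = z.+1]).
  exact: measurableU.
apply/seteqP; split => w /=.
  by rewrite leq_eqVlt ltnS => /orP[/eqP ->|]; [right|left].
by move=> [h|->] //; apply: leq_trans h _.
Qed.

Lemma pmf_prod (K : nat) (V : 'I_K -> Omega -> nat) (C : 'I_K -> nat -> R) :
  (forall a z, measurable [set w | V a w = z]) ->
  (forall b : 'I_K -> nat,
     P [set w | forall a, (V a w <= b a)%N] = (\prod_a C a (b a))%:E) ->
  forall f : 'I_K -> nat,
     P [set w | forall a, V a w = f a] = (\prod_a pmC (C a) (f a))%:E.
Proof.
move=> hV hC.
have mev : forall (T : {set 'I_K}) (f : 'I_K -> nat),
  measurable [set w | forall a, if a \in T then V a w = f a else (V a w <= f a)%N].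
  move=> T f; apply: meas_forall_fin => a; case: (a \in T) => //.
  exact: hV. exact: (meas_le (hV a)).
suff gen : forall n (T : {set 'I_K}) (f : 'I_K -> nat), #|T| = n ->
  P [set w | forall a, if a \in T then V a w = f a else (V a w <= f a)%N]
  = (\prod_a (if a \in T then pmC (C a) (f a) else C a (f a)))%:E.
  move=> f; have := gen _ (setTfor 'I_K) f erefl.
  rewrite (_ : [set w | _] = [set w | forall a, V a w = f a]).
    by move=> ->; congr (_%:E); apply: eq_bigr => a _; rewrite !inE.
  by apply/seteqP; split => w /= h a; move: (h a); rewrite !inE.
elim => [|n IH] T f hT.
  have T0 : T = finset.set0 by apply/eqP; rewrite -cards_eq0 hT.
  rewrite T0; under eq_bigr do rewrite inE.
  rewrite -hC; congr (P _); apply/seteqP; split => w /= h a; move: (h a); rewrite inE //.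
have [a aT] : exists a, a \in T.
  by apply/set0Pn; rewrite -card_gt0 hT.
set T' := T :\ a.
have hT' : #|T'| = n by move: (cardsD1 a T); rewrite aT hT add1n => -[].
have memT : forall x, (x \in T) = (x == a) || (x \in T').
  by move=> x; rewrite /T' in_setD1; case: eqP => // ->.
case fa : (f a) => [|z].
  rewrite (_ : [set w | _] = [set w | forall x, if x \in T' then V x w = f x else (V x w <= f x)%N]).
    rewrite IH //; congr (_%:E); apply: eq_bigr => x _.
    rewrite memT; case: eqP => [->|]; last by [].
    by rewrite fa /T' in_setD1 eqxx.
  apply/seteqP; split => w /= h x; move: (h x); rewrite memT.
    case: eqP => [->|] /=; last by [].
    by rewrite /T' in_setD1 eqxx /= fa => ->.
  case: eqP => [->|] /=; last by [].
  by rewrite /T' in_setD1 eqxx /= fa leqn0 => /eqP.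
set f0 := fun x => if x == a then z else f x.
set E1 := [set w | forall x, if x \in T' then V x w = f x else (V x w <= f x)%N].
set E0 := [set w | forall x, if x \in T' then V x w = f0 x else (V x w <= f0 x)%N].
have aT' : a \notin T' by rewrite /T' in_setD1 eqxx.
have E01 : E0 `<=` E1.
  move=> w h x; move: (h x); rewrite /f0; case: eqP => [->|_] //.
  by rewrite (negbTE aT') fa => /leq_trans; apply.
have Eq : [set w | forall x, if x \in T then V x w = f x else (V x w <= f x)%N] = E1 `\` E0.
  apply/seteqP; split => w /=.
    move=> h; split.
      move=> x; move: (h x); rewrite memT; case: eqP => [->|] //=.
      by rewrite (negbTE aT') => ->.
    move=> h0; move: (h a) (h0 a); rewrite aT (negbTE aT') /f0 eqxx fa => ->.
    by rewrite ltnn.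
  move=> [h1 h0] x; rewrite memT; case: eqP => [->|nxa] /=; last first.
    by move: (h1 x).
  move: (h1 a); rewrite (negbTE aT') fa leq_eqVlt => /orP[/eqP //|].
  rewrite ltnS => hz; exfalso; apply: h0 => y; rewrite /f0.
  case: eqP => [->|_]; first by rewrite (negbTE aT').
  exact: h1.
have mE1 : measurable E1 by exact: mev.
have mE0 : measurable E0 by exact: mev.
have h : P E1 = (P (E1 `\` E0) + P E0)%E.
  by rewrite -{2}(setIidr E01); exact: measureDI.
rewrite /E1 /E0 (IH T' f hT') (IH T' f0 hT') -Eq in h.
have -> : P [set w | forall x, if x \in T then V x w = f x else (V x w <= f x)%N]
  = ((\prod_a (if a \in T' then pmC (C a) (f a) else C a (f a))) -
     (\prod_a (if a \in T' then pmC (C a) (f0 a) else C a (f0 a))))%:E.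
  by rewrite EFinB h addeK.
congr (_%:E).
rewrite (bigD1 a) //= [X in _ - X](bigD1 a) //= [X in _ = X](bigD1 a) //=.
have f0a : f0 a = z by rewrite /f0 eqxx.
rewrite (negbTE aT') aT f0a fa /=.
have -> : \prod_(x < K | x != a) (if x \in T' then pmC (C x) (f0 x) else C x (f0 x))
  = \prod_(x < K | x != a) (if x \in T' then pmC (C x) (f x) else C x (f x)).
  by apply: eq_bigr => x nxa; rewrite /f0 (negbTE nxa).
have -> : \prod_(x < K | x != a) (if x \in T then pmC (C x) (f x) else C x (f x))
  = \prod_(x < K | x != a) (if x \in T' then pmC (C x) (f x) else C x (f x)).
  by apply: eq_bigr => x nxa; rewrite memT (negbTE nxa).
by rewrite -mulrBl.
Qed.


Definition tser (K : nat) (O : set {ffun 'I_K -> nat}) (p : {ffun 'I_K -> nat} -> R) (n : nat) : R :=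
  match pickle_inv n with
  | Some f => if pselect (O f) then p f else 0
  | None => 0
  end.

Lemma preimage_series (K : nat) (V : 'I_K -> Omega -> nat) (p : {ffun 'I_K -> nat} -> R)
  (O : set {ffun 'I_K -> nat}) :
  (forall a z, measurable [set w | V a w = z]) ->
  (forall f : {ffun 'I_K -> nat}, P [set w | forall a, V a w = f a] = (p f)%:E) ->
  P ((fun w => [ffun a => V a w]) @^-1` O) = (\sum_(0 <= n <oo) (tser O p n)%:E)%E.
Proof.
move=> hV hp.
set vf := fun w => [ffun a => V a w].
set G := fun n => match pickle_inv n with
  | Some f => if pselect (O f) then [set w | forall a, V a w = f a] else set0
  | None => set0 end.
have hG : forall n, G n = vf @^-1` O `&` [set w | choice.pickle (vf w) = n].
  move=> n; rewrite /G; case hn : (pickle_inv n) => [f|].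
    have pf : choice.pickle f = n by have := @pickle_invK {ffun 'I_K -> nat} n; rewrite hn.
    case: pselect => Of.
      apply/seteqP; split => w /=.
        move=> h; have -> : vf w = f by apply/ffunP => a; rewrite ffunE h.
        by split.
      move=> [_ h] a; move: h; rewrite -pf => /(pcan_inj pickleK_inv) <-.
      by rewrite /vf ffunE.
    apply/seteqP; split => w //= [Ow h]; apply: Of.
    by move: h Ow; rewrite -pf => /(pcan_inj pickleK_inv) ->.
  apply/seteqP; split => w //= [_ h].
  by move: hn; rewrite -h pickleK_inv.
have mG : forall n, measurable (G n).
  move=> n; rewrite /G; case: (pickle_inv n) => [f|] //.
  case: pselect => Of //=; apply: meas_forall_fin => a; exact: hV.
have Gv : forall n, P (G n) = (tser O p n)%:E.
  move=> n; rewrite /G /tser; case: (pickle_inv n) => [f|]; last by rewrite measure0.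
  by case: pselect => Of; rewrite ?measure0 // hp.
have -> : vf @^-1` O = \bigcup_(n in [set: nat]) G n.
  apply/seteqP; split => w /=.
    move=> Ow; exists (choice.pickle (vf w)) => //; rewrite hG; split => //.
  by move=> [n _]; rewrite hG => -[].
rewrite measure_bigcup //; last first.
  move=> i j _ _ [w []]; rewrite !hG => -[_ <-] [_ <-] //.
rewrite (@eq_eseriesl _ _ xpredT); last by move=> i; rewrite in_setT.
by apply: eq_eseriesr => n _; exact: Gv.
Qed.

Lemma dp_from_pmf (K : nat) (V V' : 'I_K -> Omega -> nat)
  (p p' : {ffun 'I_K -> nat} -> R) (e : R) :
  (forall a z, measurable [set w | V a w = z]) ->
  (forall a z, measurable [set w | V' a w = z]) ->
  (forall f : {ffun 'I_K -> nat}, P [set w | forall a, V a w = f a] = (p f)%:E) ->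
  (forall f : {ffun 'I_K -> nat}, P [set w | forall a, V' a w = f a] = (p' f)%:E) ->
  0 <= e -> (forall f, p f <= e * p' f) ->
  forall O : set {ffun 'I_K -> nat},
  (P ((fun w => [ffun a => V a w]) @^-1` O) <=
   e%:E * P ((fun w => [ffun a => V' a w]) @^-1` O))%E.
Proof.
move=> hV hV' hp hp' e0 hpp O.
have p0 : forall f, 0 <= p f by move=> f; rewrite -lee_fin -hp measure_ge0.
have p0' : forall f, 0 <= p' f by move=> f; rewrite -lee_fin -hp' measure_ge0.
rewrite (preimage_series _ hV hp) (preimage_series _ hV' hp').
rewrite -nneseriesZl; last by move=> n _; rewrite lee_fin /tser; case: pickle_inv => [f|] //; case: pselect => Of /=; rewrite ?p0'.
apply: lee_nneseries.
  by move=> n _ _; rewrite lee_fin /tser; case: pickle_inv => [f|] //; case: pselect => Of /=; rewrite ?p0.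
move=> n _; rewrite -EFinM lee_fin /tser; case: pickle_inv => [f|]; last by rewrite mulr0.
by case: pselect => Of /=; rewrite ?mulr0.
Qed.

End Meas.

Lemma getfE (K : choiceType) (V : Type) (X : {fmap K -> V}) (u : domf X) :
  X.[? val u]%fmap = Some (X u).
Proof. rewrite (in_fnd (valP u)); congr Some; congr (X _); exact: val_inj. Qed.

Lemma count_prod (R : comPzSemiRingType) (T : Type) (k : nat) (s : seq T)
  (g : T -> 'I_k) (phi : 'I_k -> R) :
  \prod_(v <- s) phi (g v) = \prod_a phi a ^+ count (fun v => g v == a) s.
Proof.
elim: s => [|x s IH]; first by rewrite big_nil big1 // => a _; rewrite expr0.
rewrite big_cons IH /=.
rewrite [RHS](eq_bigr (fun a => phi a ^+ (g x == a) * phi a ^+ count (fun v => g v == a) s)); last first.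
  by move=> a _ /=; rewrite exprD.
rewrite big_split /=; congr (_ * _).
rewrite (bigD1 (g x)) //= eqxx expr1 big1 ?mulr1 // => a; rewrite eq_sym => /negbTE ->.
by rewrite expr0.
Qed.

Lemma meas_eq_of_le (d : measure_display) (Omega : measurableType d) (g : Omega -> nat) :
  (forall z, measurable [set w | (g w <= z)%N]) ->
  forall z, measurable [set w | g w = z].
Proof.
move=> h [|z].
  by rewrite (_ : [set w | _] = [set w | (g w <= 0)%N]) //; apply/seteqP; split => w /=; rewrite leqn0 => /eqP.
rewrite (_ : [set w | _] = [set w | (g w <= z.+1)%N] `\` [set w | (g w <= z)%N]).
  exact: measurableD.
apply/seteqP; split => w /=; first by move=> ->; rewrite leqnn ltnn.
by move=> [h1 h2]; apply/eqP; rewrite eqn_leq h1 /= ltnNge; apply/negP.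
Qed.

Section Model.
Context (R : realType) (d : measure_display) (Omega : measurableType d)
  (P : probability Omega R) (idT : choiceType) (Kk : Type) (n k : nat)
  (H : Kk -> idT -> nat) (zt : Omega -> Kk) (Yt : 'I_k.+1 -> nat -> Omega -> nat)
  (eps gamma : R) (c : 'I_k.+1 -> 'rV[R]_n) (p : R).
Hypothesis hiid : iid_geometric P (hash_source H zt Yt) p.

Local Notation G := (hash_source H zt Yt).
Local Notation m := (alpha_min eps gamma).
Local Notation np := (n_p eps).
Local Notation F := (geomCDF p).
Local Notation V X := (DPFM H zt Yt eps gamma c X).

Definition getf (X : dataset R idT n) (v : idT) : 'rV[R]_n := odflt 0 X.[? v]%fmap.

Lemma getfE' (X : dataset R idT n) (u : domf X) : getf X (val u) = X u.
Proof. by rewrite /getf getfE. Qed.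

Lemma V_le (X : dataset R idT n) a w b : (V X a w <= b)%N <->
  [/\ (m <= b)%N, (forall j : 'I_np, Yt a j w <= b)%N &
      (forall u : domf X, assign c (X u) == a -> (H (zt w) (val u) <= b)%N)].
Proof.
rewrite /DPFM !geq_max; split.
  move=> /andP[/andP[h1 h2] h3]; split => //.
    by move/bigmax_leqP: h1 => h j; apply: h.
  by move/bigmax_leqP: h2.
move=> [h3 h1 h2]; rewrite h3 andbT; apply/andP; split; apply/bigmax_leqP => //.
Qed.

Lemma measV_le (X : dataset R idT n) a z : measurable [set w | (V X a w <= z)%N].
Proof.
have mG : forall j z, measurable [set w | (G j w <= z)%N].
  move=> j; apply: meas_le; exact: hiid.1.
rewrite (_ : [set w | _] = [set w | (m <= z)%N] `&`
   ([set w | forall j : 'I_np, (G (inr (a, val j)) w <= z)%N] `&`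
    [set w | forall u : domf X, if assign c (X u) == a then (G (inl (val u)) w <= z)%N else true])).
  apply: measurableI.
    case: (m <= z)%N.
      by rewrite (_ : [set w | true] = setT) //; apply/seteqP; split.
    by rewrite (_ : [set w | false] = set0) //; apply/seteqP; split.
  apply: measurableI; apply: meas_forall_fin => x; first exact: mG.
  case: (assign c (X x) == a); first exact: mG.
  suff -> : (fun _ : Omega => is_true true) = @setT Omega by exact: measurableT.
  by apply/seteqP; split.
apply/seteqP; split => w /=.
  move/V_le => [h1 h2 h3]; split => //; split => //= u.
  by case: ifP => // /h3.
move=> [h1 [h2 h3]]; apply/V_le; split => // u hu.
by move: (h3 u); rewrite hu.
Qed.

Lemma measV (X : dataset R idT n) a z : measurable [set w | V X a w = z].
Proof. by apply: meas_eq_of_le => y; exact: measV_le. Qed.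


Lemma cdf_V (X : dataset R idT n) (N : 'I_k.+1 -> nat) :
  (forall phi : 'I_k.+1 -> R,
     \prod_(u : domf X) phi (assign c (X u)) = \prod_a phi a ^+ N a) ->
  forall b : 'I_k.+1 -> nat,
  P [set w | forall a, (V X a w <= b a)%N] = (\prod_a Dn m (np + N a) F (b a))%:E.
Proof.
move=> hN b.
case: (boolP [forall a, m <= b a]%N) => [/forallP hb | ]; last first.
  rewrite negb_forall => /existsP [a0 ha0].
  rewrite (_ : [set w | _] = set0); last first.
    apply/seteqP; split => w //= h.
    by move: (h a0) => /V_le [h1 _ _]; rewrite h1 in ha0.
  rewrite measure0 (bigD1 a0) //= /Dn (negbTE ha0) mul0r mul0r //.
pose f1 := fun aj : 'I_k.+1 * 'I_np => (inr (aj.1, val aj.2) : idT + ('I_k.+1 * nat)).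
pose s := map f1 (index_enum ('I_k.+1 * 'I_np)%type) ++ [seq (inl v : idT + ('I_k.+1 * nat)) | v <- domf X].
pose zz := fun j : idT + ('I_k.+1 * nat) =>
  match j with inl v => b (assign c (getf X v)) | inr aj => b aj.1 end.
have f1inj : injective f1 by move=> [a1 j1] [a2 j2] [-> /val_inj ->].
have us : uniq s.
  rewrite cat_uniq; apply/and3P; split.
  - by rewrite map_inj_uniq // index_enum_uniq.
  - apply/hasPn => j /mapP [v _ ->]; apply/negP => /mapP [aj _] //.
  - by rewrite map_inj_uniq ?fset_uniq // => x y [].
rewrite (_ : [set w | _] = [set w | forall j, j \in s -> (G j w <= zz j)%N]); last first.
  apply/seteqP; split => w /=.
    move=> h j; rewrite mem_cat => /orP[/mapP [aj _ ->] | /mapP [v vX ->]] /=.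
      by move: (h aj.1) => /V_le [_ h2 _]; apply: h2.
    move: (h (assign c (X (FSetSub vX)))) => /V_le [_ _ h3].
    by have := h3 (FSetSub vX) (eqxx _); rewrite -getfE'.
  move=> h a; apply/V_le; split; first exact: hb.
    move=> j; have := h (f1 (a, j)); rewrite mem_cat map_f ?mem_index_enum //=; exact.
  move=> u /eqP <-; have := h (inl (val u)).
  by rewrite mem_cat (map_f _ (valP u)) orbT /= getfE'; exact.
rewrite hiid.2 //; congr (_%:E).
rewrite big_cat /= !big_map /=.
rewrite (eq_bigr (fun a => F (b a) ^+ np * F (b a) ^+ N a)); last first.
  by move=> a _; rewrite /Dn hb mul1r exprD.
rewrite big_split /=; congr (_ * _).
  rewrite (eq_bigl (fun aj : 'I_k.+1 * 'I_np => predT aj.1 && predT aj.2)) //.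
  rewrite -(pair_big predT predT (fun a (j : 'I_np) => F (b a))) /=.
  by apply: eq_bigr => a _; rewrite prodr_const card_ord.
rewrite big_seq_fsetE /=.
rewrite (eq_bigr (fun u : domf X => F (b (assign c (X u))))); last by move=> u _; rewrite getfE'.
exact: (hN (fun a => F (b a))).
Qed.

Lemma pmf_V (X : dataset R idT n) (N : 'I_k.+1 -> nat) :
  (forall phi : 'I_k.+1 -> R,
     \prod_(u : domf X) phi (assign c (X u)) = \prod_a phi a ^+ N a) ->
  forall f : 'I_k.+1 -> nat,
  P [set w | forall a, V X a w = f a] = (\prod_a pmN m (np + N a) F (f a))%:E.
Proof.
move=> hN; apply: (pmf_prod (P := P)); first exact: measV.
exact: cdf_V.
Qed.


Lemma dp_add (X : dataset R idT n) (u0 : idT) (x : 'rV[R]_n) :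
  u0 \notin domf X ->
  (forall z, 0 <= F z <= 1) -> {homo F : x y / (x <= y)%N >-> x <= y} ->
  1 <= expR eps * F m -> (0 < np)%N -> 1 + np%:R^-1 <= expR eps ->
  (forall O, (P ((fun w => [ffun a => V X a w]) @^-1` O) <=
     (expR eps)%:E * P ((fun w => [ffun a => V X.[u0 <- x]%fmap a w]) @^-1` O))%E) /\
  (forall O, (P ((fun w => [ffun a => V X.[u0 <- x]%fmap a w]) @^-1` O) <=
     (expR eps)%:E * P ((fun w => [ffun a => V X a w]) @^-1` O))%E).
Proof.
move=> u0X F01 Fh eF np0 enp.
set X' := X.[u0 <- x]%fmap.
set a0 := assign c x.
pose N := fun a => count (fun u : domf X => assign c (X u) == a) (index_enum (domf X)).
have hN : forall phi : 'I_k.+1 -> R,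
    \prod_(u : domf X) phi (assign c (X u)) = \prod_a phi a ^+ N a.
  by move=> phi; exact: count_prod.
pose N' := fun a => (N a + (a0 == a))%N.
have hN' : forall phi : 'I_k.+1 -> R,
    \prod_(u : domf X') phi (assign c (X' u)) = \prod_a phi a ^+ N' a.
  move=> phi.
  rewrite (eq_bigr (fun u : domf X' => phi (assign c (getf X' (val u))))); last first.
    by move=> u _; rewrite getfE'.
  rewrite -(big_seq_fsetE _ _ predT (fun v => phi (assign c (getf X' v)))) /=.
  rewrite big_fsetU1 //=.
  rewrite {1}/getf fnd_set eqxx /=.
  rewrite big_seq_fsetE /=.
  rewrite (eq_bigr (fun u : domf X => phi (assign c (X u)))); last first.
    move=> u _; rewrite /getf fnd_set.
    have -> : (val u == u0) = false.
      by apply/negbTE; apply: contraNneq u0X => <-; exact: valP.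
    by rewrite getfE.
  rewrite hN.
  rewrite [RHS](eq_bigr (fun a => phi a ^+ (a0 == a) * phi a ^+ N a)); last first.
    by move=> a _; rewrite /N' exprD mulrC.
  rewrite big_split /=; congr (_ * _).
  rewrite (bigD1 a0) //= eqxx expr1 big1 ?mulr1 // => a.
  by rewrite eq_sym => /negbTE ->; rewrite expr0.
have e0 : 0 <= expR eps by apply: ltW; exact: expR_gt0.
have rat : forall f : 'I_k.+1 -> nat,
    \prod_a pmN m (np + N a) F (f a) <= expR eps * \prod_a pmN m (np + N' a) F (f a) /\
    \prod_a pmN m (np + N' a) F (f a) <= expR eps * \prod_a pmN m (np + N a) F (f a).
  move=> f.
  rewrite [\prod_a pmN m (np + N a) F (f a)](bigD1 a0) //=.
  rewrite [\prod_a pmN m (np + N' a) F (f a)](bigD1 a0) //=.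
  have -> : \prod_(a | a != a0) pmN m (np + N' a) F (f a) =
            \prod_(a | a != a0) pmN m (np + N a) F (f a).
    by apply: eq_bigr => a; rewrite /N' eq_sym => /negbTE ->; rewrite addn0.
  rewrite /N' eqxx addn1 addnS.
  have F0 : forall z, 0 <= F z by move=> z; case/andP: (F01 z).
  have r0 : 0 <= \prod_(a | a != a0) pmN m (np + N a) F (f a).
    by apply: prodr_ge0 => a _; apply: pm_ge0.
  have Npos : (0 < np + N a0)%N by apply: leq_trans np0 (leq_addr _ _).
  have eN : 1 + (np + N a0)%:R^-1 <= expR eps.
    apply: le_trans enp; rewrite lerD2l lef_pV2 ?ler_nat ?leq_addr // posrE ltr0n //.
  have [h1 h2] := pm_ratio (f a0) F01 Fh eF Npos eN.
  split; rewrite mulrA; apply: ler_wpM2r => //.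
have hX := pmf_V hN.
have hX' := pmf_V hN'.
split => O.
  apply: (dp_from_pmf (P := P)) (fun a => measV X a) (fun a => measV X' a) _ _ e0 _ O.
  - by move=> f; exact: hX.
  - by move=> f; exact: hX'.
  - by move=> f; case: (rat f).
apply: (dp_from_pmf (P := P)) (fun a => measV X' a) (fun a => measV X a) _ _ e0 _ O.
- by move=> f; exact: hX'.
- by move=> f; exact: hX.
- by move=> f; case: (rat f).
Qed.

End Model.

End AuxMeas.
End Helpers.

Theorem lemma4p3 (R : realType) (d : measure_display) (Omega : measurableType d)
  (P : probability Omega R) (idT : choiceType) (K : Type) (n k M : nat)
  (eps2 delta2 gamma : R)
  (H : K -> idT -> nat)
  (zeta : 'I_M -> Omega -> K)
  (Y : 'I_M -> 'I_k.+1 -> nat -> Omega -> nat)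
  (c : 'I_k.+1 -> 'rV[R]_n) (i : 'I_M) :
  0 < eps2 -> 0 < delta2 -> delta2 < 1 -> 0 < gamma ->
  iid_geometric P (hash_source H (zeta i) (Y i)) (gamma / (1 + gamma)) ->
  eps_DP P (eps_prime eps2 delta2 M)
    (DPFMPS_row H (zeta i) (Y i) (eps_prime eps2 delta2 M) gamma c).
Proof.
move=> e2 d0 d1 g0 hiid.
have M0 : (0 < M)%N by apply: leq_ltn_trans (leq0n i) (ltn_ord i).
have ep := eps_pos e2 d0 d1 M0.
have [np0 enp] := np_facts ep.
have [F01 Fh] := F_facts g0.
have eF := alpha_facts ep g0.
move=> X X' [[u [x [uX ->]]] | [u [x [uX ->]]]] O.
  exact: (dp_add c hiid x uX F01 Fh eF np0 enp).1.
exact: (dp_add c hiid x uX F01 Fh eF np0 enp).2.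
Qed.
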